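(* The following cut rules are admissible in $\mathsf{G}(\mathbf{KT}^+_D)$: (Cut$_1$) if $\vdash\emptyset\mid\Gamma\Rightarrow\Delta,\lambda$ and $\vdash\emptyset\mid\lambda,\Gamma'\Rightarrow\Delta'$ then $\vdash\emptyset\mid\Gamma,\Gamma'\Rightarrow\Delta,\Delta'$; (Cut$_2$) if $\vdash\Sigma\mid\Gamma\Rightarrow\Delta,D_G\lambda$ and $\vdash D_G\lambda,\Sigma'\mid\Gamma'\Rightarrow\Delta'$ then $\vdash\Sigma',\Sigma\mid\Gamma,\Gamma'\Rightarrow\Delta,\Delta'$. Here $\Gamma,\Gamma',\Delta,\Delta'$ are arbitrary finite multisets of formulas, $\Sigma,\Sigma'$ finite multisets of outmost-boxed formulas, $\lambda$ a formula and $G\in\mathsf{Grp}$.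
   Context: Language: fix a finite nonempty set $\mathsf{Agt}$ of agents and a countable set $\mathsf{Prop}$ of propositional variables; $\mathsf{Grp}$ is the set of nonempty subsets of $\mathsf{Agt}$. Formulas: $\alpha::=p\mid\bot\mid\alpha\wedge\alpha\mid\alpha\vee\alpha\mid\alpha\rightarrow\alpha\mid\neg\alpha\mid D_G\alpha$ ($p\in\mathsf{Prop}$, $G\in\mathsf{Grp}$). Outmost-boxed formula: one of the form $D_G\gamma$. Calculus $\mathsf{G}(\mathbf{KT}^+_D)$ ($\vdash$ denotes derivability in it, i.e. being the root of a finite tree built from initial sequents by the rules): a T-sequent $\Sigma\mid\Gamma\Rightarrow\Delta$ consists of finite multisets $\Gamma,\Delta$ of formulas and a finite multiset $\Sigma$ of outmost-boxed formulas. Initial sequents: $\Sigma\mid\Gamma,p\Rightarrow p,\Delta$ ($p\in\mathsf{Prop}$) and $\Sigma\mid\bot,\Gamma\Rightarrow\Delta$. Propositional rules (with $\Sigma$ unchanged): $(R\wedge)$ from $\Sigma\mid\Gamma\Rightarrow\Delta,\alpha_1$ and $\Sigma\mid\Gamma\Rightarrow\Delta,\alpha_2$ infer $\Sigma\mid\Gamma\Rightarrow\Delta,\alpha_1\wedge\alpha_2$; $(L\wedge)$ from $\Sigma\mid\alpha_1,\alpha_2,\Gamma\Rightarrow\Delta$ infer $\Sigma\mid\alpha_1\wedge\alpha_2,\Gamma\Rightarrow\Delta$; $(R\vee)$ from $\Sigma\mid\Gamma\Rightarrow\Delta,\alpha_1,\alpha_2$ infer $\Sigma\mid\Gamma\Rightarrow\Delta,\alpha_1\vee\alpha_2$;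 $(L\vee)$ from $\Sigma\mid\alpha_1,\Gamma\Rightarrow\Delta$ and $\Sigma\mid\alpha_2,\Gamma\Rightarrow\Delta$ infer $\Sigma\mid\alpha_1\vee\alpha_2,\Gamma\Rightarrow\Delta$; $(R\rightarrow)$ from $\Sigma\mid\alpha_1,\Gamma\Rightarrow\Delta,\alpha_2$ infer $\Sigma\mid\Gamma\Rightarrow\Delta,\alpha_1\rightarrow\alpha_2$; $(L\rightarrow)$ from $\Sigma\mid\Gamma\Rightarrow\Delta,\alpha_1$ and $\Sigma\mid\alpha_2,\Gamma\Rightarrow\Delta$ infer $\Sigma\mid\alpha_1\rightarrow\alpha_2,\Gamma\Rightarrow\Delta$; $(R\neg)$ from $\Sigma\mid\alpha,\Gamma\Rightarrow\Delta$ infer $\Sigma\mid\Gamma\Rightarrow\Delta,\neg\alpha$; $(L\neg)$ from $\Sigma\mid\Gamma\Rightarrow\Delta,\alpha$ infer $\Sigma\mid\neg\alpha,\Gamma\Rightarrow\Delta$. Modal rules: $(D_K^+)$: from $\emptyset\mid\alpha_1,\dots,\alpha_n\Rightarrow\beta$ ($n\ge0$) infer $\Sigma,D_{G_1}\alpha_1,\dots,D_{G_n}\alpha_n\mid\Pi\Rightarrow D_G\beta,\Omega$, provided $G_i\subseteq G$ for all $i$, $\Sigma$ consists only of formulas $D_H\gamma$ with $H\not\subseteq G$, $\Pi$ only of propositional variables and $\bot$, and $\Omega$ only of propositional variables, $\bot$ and outmost-boxed formulas; $(D_T^+)$: from $D_G\alpha,\Sigma\mid\Gamma,\alpha\Rightarrow\Delta$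 infer $\Sigma\mid\Gamma,D_G\alpha\Rightarrow\Delta$. *)

(* Defs.v *)
From HB Require Import structures.
From mathcomp Require Import all_boot.

Set Implicit Arguments.
Unset Strict Implicit.
Unset Printing Implicit Defensive.

Section Calculus.

Variable Agt : finType.

Record grp := Grp { gset : {set Agt}; gset_neq0 : gset != set0 }.
HB.instance Definition _ := [isSub for gset].
HB.instance Definition _ := [Equality of grp by <:].

Inductive form : Type :=
| Var of nat
| Bot
| And of form & form
| Or of form & form
| Imp of form & form
| Neg of form
| Box of grp & form.   (* Box G a  =  D_G a *)

Definition form_eq_dec : comparable form.
Proof.
move=> x y; unfold decidable; decide equality;
  exact: (eq_comparable _ _).
Defined.

HB.instance Definition _ := comparableMixin form_eq_dec.

Definition isBox (a : form) : bool := if a is Box _ _ then true else false.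

Definition notBelow (G : grp) (a : form) : bool :=
  if a is Box H _ then ~~ (gset H \subset gset G) else false.

Definition isAtomBot (a : form) : bool :=
  match a with Var _ | Bot => true | _ => false end.

Definition isAtomBotBox (a : form) : bool :=
  match a with Var _ | Bot | Box _ _ => true | _ => false end.

(* der S Gam Del : the T-sequent  S | Gam => Del  is derivable.
   Multisets are lists; every rule's conclusion may be any permutation
   (perm_eq) of each of its three components. *)
Inductive der : seq form -> seq form -> seq form -> Prop :=
| der_init S Gam Del p S' Gam' Del' :
    all isBox S ->
    perm_eq S' S -> perm_eq Gam' (Var p :: Gam) -> perm_eq Del' (Var p :: Del) ->
    der S' Gam' Del'
| der_bot S Gam Del S' Gam' Del' :
    all isBox S ->
    perm_eq S' S -> perm_eq Gam' (Bot :: Gam) -> perm_eq Del' Del ->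
    der S' Gam' Del'
| der_Rand S Gam Del a1 a2 S' Gam' Del' :
    der S Gam (a1 :: Del) -> der S Gam (a2 :: Del) ->
    perm_eq S' S -> perm_eq Gam' Gam -> perm_eq Del' (And a1 a2 :: Del) ->
    der S' Gam' Del'
| der_Land S Gam Del a1 a2 S' Gam' Del' :
    der S (a1 :: a2 :: Gam) Del ->
    perm_eq S' S -> perm_eq Gam' (And a1 a2 :: Gam) -> perm_eq Del' Del ->
    der S' Gam' Del'
| der_Ror S Gam Del a1 a2 S' Gam' Del' :
    der S Gam (a1 :: a2 :: Del) ->
    perm_eq S' S -> perm_eq Gam' Gam -> perm_eq Del' (Or a1 a2 :: Del) ->
    der S' Gam' Del'
| der_Lor S Gam Del a1 a2 S' Gam' Del' :
    der S (a1 :: Gam) Del -> der S (a2 :: Gam) Del ->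
    perm_eq S' S -> perm_eq Gam' (Or a1 a2 :: Gam) -> perm_eq Del' Del ->
    der S' Gam' Del'
| der_Rimp S Gam Del a1 a2 S' Gam' Del' :
    der S (a1 :: Gam) (a2 :: Del) ->
    perm_eq S' S -> perm_eq Gam' Gam -> perm_eq Del' (Imp a1 a2 :: Del) ->
    der S' Gam' Del'
| der_Limp S Gam Del a1 a2 S' Gam' Del' :
    der S Gam (a1 :: Del) -> der S (a2 :: Gam) Del ->
    perm_eq S' S -> perm_eq Gam' (Imp a1 a2 :: Gam) -> perm_eq Del' Del ->
    der S' Gam' Del'
| der_Rneg S Gam Del a S' Gam' Del' :
    der S (a :: Gam) Del ->
    perm_eq S' S -> perm_eq Gam' Gam -> perm_eq Del' (Neg a :: Del) ->
    der S' Gam' Del'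
| der_Lneg S Gam Del a S' Gam' Del' :
    der S Gam (a :: Del) ->
    perm_eq S' S -> perm_eq Gam' (Neg a :: Gam) -> perm_eq Del' Del ->
    der S' Gam' Del'
(* (D_K^+): from  0 | a_1..a_n => b  infer
   S, D_{G_1}a_1, ..., D_{G_n}a_n | Pi => D_G b, Om *)
| der_DK (bs : seq (grp * form)) b G S Pi Om S' Gam' Del' :
    der [::] (map snd bs) [:: b] ->
    all (fun p => gset p.1 \subset gset G) bs ->
    all (notBelow G) S -> all isAtomBot Pi -> all isAtomBotBox Om ->
    perm_eq S' (S ++ map (fun p => Box p.1 p.2) bs) ->
    perm_eq Gam' Pi -> perm_eq Del' (Box G b :: Om) ->
    der S' Gam' Del'
| der_DT S Gam Del G a S' Gam' Del' :
    der (Box G a :: S) (a :: Gam) Del ->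
    perm_eq S' S -> perm_eq Gam' (Box G a :: Gam) -> perm_eq Del' Del ->
    der S' Gam' Del'.

End Calculus.

(* Main.v *)
Require Import Defs.
From HB Require Import structures.
From mathcomp Require Import all_boot zify.
Set Implicit Arguments.
Unset Strict Implicit.
Unset Printing Implicit Defensive.


Ltac pcount :=
  let a := fresh "a" in
  apply/permP; intro a;
  repeat match goal with H : is_true (perm_eq _ _) |- _ =>
     move: (permP H a); clear H end;
  rewrite /= ?count_cat /= ?count_cat /=;
  repeat match goal with |- context [nat_of_bool (a ?t)] =>
     let n := fresh "n" in set n := nat_of_bool (a t); clearbody n end;
  intros; lia.

Section S.
Variable Agt : finType.
Notation form := (form Agt).
Notation der := (@der Agt).
Notation Var := (@Var Agt).
Notation Bot := (@Bot Agt).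


Lemma der_perm S G D S2 G2 D2 :
  der S G D -> perm_eq S2 S -> perm_eq G2 G -> perm_eq D2 D -> der S2 G2 D2.
Proof.
move=> H p1 p2 p3.
case: H p1 p2 p3; intros;
  [eapply der_init | eapply der_bot | eapply der_Rand | eapply der_Land
  | eapply der_Ror | eapply der_Lor | eapply der_Rimp | eapply der_Limp
  | eapply der_Rneg | eapply der_Lneg | eapply der_DK | eapply der_DT];
  try match goal with
  | p : is_true (perm_eq ?X ?Y) |- is_true (perm_eq ?X _) =>
      apply: (perm_trans p); eassumption end;
  eassumption.
Qed.

End S.

Ltac dp := match goal with H : der _ _ _ |- der _ _ _ => apply: (der_perm H); pcount end.
Ltac sa := solve [ dp | pcount | eassumption | done ].

Section S0.
Variable Agt : finType.
Notation form := (form Agt).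
Notation der := (@der Agt).
Notation Var := (@Var Agt).
Notation Bot := (@Bot Agt).

Lemma der_isBox S G D : der S G D -> all (@isBox Agt) S.
Proof.
elim=> {S G D}; intros;
 repeat match goal with p : is_true (perm_eq ?X _) |- is_true (all _ ?X) =>
   rewrite (perm_all _ p) /= ?all_cat; clear p end => //.
rewrite all_map; apply/andP; split.
  + elim: S {H1 H4} H2 => //= x l IH /andP [h1 h2]; rewrite IH // andbT.
    by case: x h1.
  + by elim: bs {H H0 H1 H2 H3 H4} => //.
Qed.

Lemma init_mem S G D p : all (@isBox Agt) S -> Var p \in G -> Var p \in D -> der S G D.
Proof.
move=> hS hG hD; apply: (@der_init _ S (rem (Var p) G) (rem (Var p) D) p) => //;
  exact: perm_to_rem.
Qed.

Lemma bot_mem S G D : all (@isBox Agt) S -> Bot \in G -> der S G D.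
Proof.
move=> hS hG; apply: (@der_bot _ S (rem Bot G) D) => //; exact: perm_to_rem.
Qed.

Lemma perm_split (x y : form) s t u : perm_eq u (x::s) -> perm_eq u (y::t) -> x != y ->
  exists r, perm_eq s (y::r) /\ perm_eq t (x::r).
Proof.
move=> h1 h2 ne.
have ys : y \in s.
  have : y \in u by rewrite (perm_mem h2) inE eqxx.
  by rewrite (perm_mem h1) inE eq_sym (negbTE ne).
have h3 := perm_to_rem ys.
exists (rem y s); split => //; pcount.
Qed.

Lemma mem_perm (x : form) s u : perm_eq u (x :: s) -> x \in u.
Proof. by move=> h; rewrite (perm_mem h) inE eqxx. Qed.

Definition below (G : grp Agt) (x : form) : bool :=
  if x is Box H _ then gset H \subset gset G else false.
Definition body (x : form) : form := if x is Box _ a then a else x.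
Definition bb G (S : seq form) := [seq body x | x <- S & below G x].
Definition boxp (x : form) : option (grp Agt * form) :=
  if x is Box H a then Some (H, a) else None.

Lemma bb_cat G s t : bb G (s ++ t) = bb G s ++ bb G t.
Proof. by rewrite /bb filter_cat map_cat. Qed.

Lemma bb_perm G s t : perm_eq s t -> perm_eq (bb G s) (bb G t).
Proof. by move=> h; apply: perm_map; apply: perm_filter. Qed.

Lemma bb_cons G x s : bb G (x :: s) = if below G x then body x :: bb G s else bb G s.
Proof. by rewrite /bb /=; case: (below G x). Qed.

Lemma DKc S Pi Om G b :
  all (@isBox Agt) S -> all (@isAtomBot Agt) Pi -> all (@isAtomBotBox Agt) Om ->
  der [::] (bb G S) [:: b] -> der S Pi (Box G b :: Om).
Proof.
move=> hS hPi hOm hd.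
have [h1 h2 h3 h4] : [/\ map snd (pmap boxp (filter (below G) S)) = bb G S,
   all (fun p : grp Agt * form => gset p.1 \subset gset G) (pmap boxp (filter (below G) S)),
   all (notBelow G) (filter (notBelow G) S) &
   perm_eq S (filter (notBelow G) S ++ map (fun p => Box p.1 p.2) (pmap boxp (filter (below G) S)))].
  elim: S hS {hd} => //= x l IH /andP [hx hl].
  have [e1 e2 e3 e4] := IH hl.
  case: x hx => // H a _ /=.
  rewrite bb_cons /=.
  case hb: (gset H \subset gset G) => /=.
  - rewrite e1 hb e2 e3; split => //.
    move: e4; set L := filter _ _; set R := map _ _ => e4. pcount.
  - by rewrite e1 e2 e3 hb /=; split => //; rewrite perm_cons.
apply: (der_DK (bs := pmap boxp (filter (below G) S)) (S := filter (notBelow G) S)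
     (Pi := Pi) (Om := Om)) => //.
- by rewrite h1.
- exact: h2.
- exact: h3.
Qed.

Lemma DK_canon bs b G S S' :
  der [::] [seq p.2 | p <- bs] [:: b] ->
  all (fun p : grp Agt * form => gset p.1 \subset gset G) bs ->
  all (notBelow G) S -> perm_eq S' (S ++ [seq Box p.1 p.2 | p <- bs]) ->
  der [::] (bb G S') [:: b] /\ all (@isBox Agt) S'.
Proof.
move=> hd hbs hS hp; split.
- apply: der_perm hd _ _ _ => //.
  apply: perm_trans (bb_perm G hp) _; rewrite bb_cat.
  have -> : bb G S = [::].
    by move: hS; clear hp; elim: S => //= x l IH /andP [h1 h2]; rewrite bb_cons IH //; case: x h1 => //= ? ? /negbTE ->.
  suff -> : bb G [seq Box p.1 p.2 | p <- bs] = [seq p.2 | p <- bs] by [].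
  by move: hbs; clear hp; elim: bs => //= [[H a]] l IH /andP [/= h1 h2]; rewrite bb_cons /= h1 IH.
- rewrite (perm_all _ hp) all_cat all_map; apply/andP; split.
  + by move: hS; clear hp; elim: S => //= x l IH /andP [h1 h2]; rewrite IH // andbT; case: x h1.
  + by clear hd hbs hp; elim: bs.
Qed.


Lemma weak_gen S1 G1 D1 :
  all (@isAtomBot Agt) G1 -> all (@isAtomBotBox Agt) D1 -> all (@isBox Agt) S1 ->
  (forall G X b, der [::] X [:: b] -> der [::] (bb G S1 ++ X) [:: b]) ->
  forall S G D, der S G D -> der (S1 ++ S) (G1 ++ G) (D1 ++ D).
Proof.
move=> hG1 hD1 hS1 hW S G D.
elim=> {S G D}; intros.
- eapply (@der_init _ (S1 ++ S) (G1 ++ Gam) (D1 ++ Del) p); try sa.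
  by rewrite all_cat hS1.
- eapply (@der_bot _ (S1 ++ S) (G1 ++ Gam) (D1 ++ Del)); try sa.
  by rewrite all_cat hS1.
- eapply (@der_Rand _ (S1 ++ S) (G1 ++ Gam) (D1 ++ Del) a1 a2); sa.
- eapply (@der_Land _ (S1 ++ S) (G1 ++ Gam) (D1 ++ Del) a1 a2); sa.
- eapply (@der_Ror _ (S1 ++ S) (G1 ++ Gam) (D1 ++ Del) a1 a2); sa.
- eapply (@der_Lor _ (S1 ++ S) (G1 ++ Gam) (D1 ++ Del) a1 a2); sa.
- eapply (@der_Rimp _ (S1 ++ S) (G1 ++ Gam) (D1 ++ Del) a1 a2); sa.
- eapply (@der_Limp _ (S1 ++ S) (G1 ++ Gam) (D1 ++ Del) a1 a2); sa.
- eapply (@der_Rneg _ (S1 ++ S) (G1 ++ Gam) (D1 ++ Del) a); sa.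
- eapply (@der_Lneg _ (S1 ++ S) (G1 ++ Gam) (D1 ++ Del) a); sa.
- have [hb hbx] := DK_canon H H1 H2 H5.
  apply: (der_perm (S := S1 ++ S') (G := G1 ++ Pi) (D := Box G b :: D1 ++ Om)); try pcount.
  apply: DKc.
  + by rewrite all_cat hS1.
  + by rewrite all_cat hG1.
  + by rewrite all_cat hD1.
  + by rewrite bb_cat; apply: hW.
- eapply (@der_DT _ (S1 ++ S) (G1 ++ Gam) (D1 ++ Del) G a); sa.
Qed.

Lemma lweak_ab A S G D : isAtomBot A -> der S G D -> der S (A :: G) D.
Proof.
move=> hA hd; apply: (weak_gen (S1 := [::]) (G1 := [:: A]) (D1 := [::])) => //=.
by rewrite hA.
Qed.

Lemma rweak_abb A S G D : isAtomBotBox A -> der S G D -> der S G (A :: D).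
Proof.
move=> hA hd; apply: (weak_gen (S1 := [::]) (G1 := [::]) (D1 := [:: A])) => //=.
by rewrite hA.
Qed.

Lemma sweak H c S G D : (forall X b, der [::] X [:: b] -> der [::] (c :: X) [:: b]) ->
  der S G D -> der (Box H c :: S) G D.
Proof.
move=> hc hd; apply: (weak_gen (S1 := [:: Box H c]) (G1 := [::]) (D1 := [::])) => //=.
move=> G0 X b hX; rewrite bb_cons /=; case: (gset H \subset gset G0) => //=.
exact: hc.
Qed.

Lemma weakLR A : (forall S G D, der S G D -> der S (A :: G) D) /\
                 (forall S G D, der S G D -> der S G (A :: D)).
Proof.
elim: A.
- by move=> p; split => S G D; [apply: lweak_ab | apply: rweak_abb].
- by split => S G D; [apply: lweak_ab | apply: rweak_abb].
- move=> a [La Ra] b [Lb Rb]; split => S G D hd.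
  + eapply (@der_Land _ S G D a b); try sa. by apply: La; apply: Lb.
  + eapply (@der_Rand _ S G D a b); try sa. by apply: Ra. by apply: Rb.
- move=> a [La Ra] b [Lb Rb]; split => S G D hd.
  + eapply (@der_Lor _ S G D a b); try sa. by apply: La. by apply: Lb.
  + eapply (@der_Ror _ S G D a b); try sa. by apply: Ra; apply: Rb.
- move=> a [La Ra] b [Lb Rb]; split => S G D hd.
  + eapply (@der_Limp _ S G D a b); try sa. by apply: Ra. by apply: Lb.
  + eapply (@der_Rimp _ S G D a b); try sa. by apply: La; apply: Rb.
- move=> a [La Ra]; split => S G D hd.
  + eapply (@der_Lneg _ S G D a); try sa. by apply: Ra.
  + eapply (@der_Rneg _ S G D a); try sa. by apply: La.
- move=> H c [Lc Rc]; split => S G D hd.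
  + eapply (@der_DT _ S G D H c); try sa. apply: (Lc). apply: sweak => //.
    by move=> X b; apply: Lc.
  + exact: rweak_abb.
Qed.

Lemma weakL A S G D : der S G D -> der S (A :: G) D.
Proof. exact: (weakLR A).1. Qed.
Lemma weakR A S G D : der S G D -> der S G (A :: D).
Proof. exact: (weakLR A).2. Qed.

Lemma weakLs X S G D : der S G D -> der S (X ++ G) D.
Proof. by elim: X => //= x l IH hd; apply: weakL; apply: IH. Qed.
Lemma weakRs X S G D : der S G D -> der S G (X ++ D).
Proof. by elim: X => //= x l IH hd; apply: weakR; apply: IH. Qed.
Lemma weakSs X S G D : all (@isBox Agt) X -> der S G D -> der (X ++ S) G D.
Proof.
elim: X => //= x l IH /andP [hx hl] hd.
case: x hx => // H c _; apply: sweak; last by apply: IH.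
by move=> ? ?; apply: weakL.
Qed.

Lemma weak_all S1 G1 D1 S G D : all (@isBox Agt) S1 -> der S G D ->
  der (S1 ++ S) (G1 ++ G) (D1 ++ D).
Proof. by move=> h1 hd; apply: weakSs => //; apply: weakLs; apply: weakRs. Qed.

Lemma isBox_perm S S' : perm_eq S' S -> all (@isBox Agt) S -> all (@isBox Agt) S'.
Proof. by move=> h; rewrite (perm_all _ h). Qed.

Lemma notin_atoms X Pi Gam' G0 : ~~ isAtomBot X -> all (@isAtomBot Agt) Pi ->
  perm_eq Gam' Pi -> perm_eq Gam' (X :: G0) -> False.
Proof.
move=> hX hPi h1 h2.
have : X \in Pi by rewrite -(perm_mem h1) (perm_mem h2) inE eqxx.
by move/(allP hPi); rewrite (negbTE hX).
Qed.

Lemma mem_cons_neq (x y : form) s u : perm_eq u (y :: s) -> x \in u -> x != y -> x \in s.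
Proof. by move=> h; rewrite (perm_mem h) inE => /orP [/eqP ->|//]; rewrite eqxx. Qed.

Lemma linv_gen X L M (hX : ~~ isAtomBot X) (hXb : ~~ isBox X)
 (hAnd : forall S G D a1 a2, X = And a1 a2 -> der S (a1::a2::G) D -> der S (L++G) (M++D))
 (hOr : forall S G D a1 a2, X = Or a1 a2 -> der S (a1::G) D -> der S (a2::G) D -> der S (L++G) (M++D))
 (hImp : forall S G D a1 a2, X = Imp a1 a2 -> der S G (a1::D) -> der S (a2::G) D -> der S (L++G) (M++D))
 (hNeg : forall S G D a, X = Neg a -> der S G (a::D) -> der S (L++G) (M++D)) :
 forall S G D, der S G D -> forall G0, perm_eq G (X::G0) -> der S (L++G0) (M++D).
Proof.
move=> S G D; elim=> {S G D}
 [S Gam Del p S' Gam' Del' hS p1 p2 p3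
 |S Gam Del S' Gam' Del' hS p1 p2 p3
 |S Gam Del a1 a2 S' Gam' Del' d1 IH1 d2 IH2 p1 p2 p3
 |S Gam Del a1 a2 S' Gam' Del' d1 IH1 p1 p2 p3
 |S Gam Del a1 a2 S' Gam' Del' d1 IH1 p1 p2 p3
 |S Gam Del a1 a2 S' Gam' Del' d1 IH1 d2 IH2 p1 p2 p3
 |S Gam Del a1 a2 S' Gam' Del' d1 IH1 p1 p2 p3
 |S Gam Del a1 a2 S' Gam' Del' d1 IH1 d2 IH2 p1 p2 p3
 |S Gam Del a S' Gam' Del' d1 IH1 p1 p2 p3
 |S Gam Del a S' Gam' Del' d1 IH1 p1 p2 p3
 |bs b G S Pi Om S' Gam' Del' d1 IH1 hbs hS hPi hOm p1 p2 p3
 |S Gam Del G a S' Gam' Del' d1 IH1 p1 p2 p3] G0 hp.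
- apply: (@init_mem S' (L++G0) (M++Del') p (isBox_perm p1 hS)).
  + rewrite mem_cat; apply/orP; right; apply: (mem_cons_neq hp (mem_perm p2)).
    by apply: contraNneq hX => <-.
  + by rewrite mem_cat (mem_perm p3) orbT.
- apply: bot_mem (isBox_perm p1 hS) _.
  rewrite mem_cat; apply/orP; right; apply: (mem_cons_neq hp (mem_perm p2)).
  by apply: contraNneq hX => <-.
- eapply (@der_Rand _ S (L++G0) (M++Del) a1 a2); try pcount.
  + apply: der_perm (IH1 G0 _) _ _ _; pcount.
  + apply: der_perm (IH2 G0 _) _ _ _; pcount.
- case: (eqVneq X (And a1 a2)) => e.
  + move: (hp); rewrite e => hp'.
    apply: der_perm (hAnd S G0 Del a1 a2 e _) _ _ _; sa.
  + have [r [r1 r2]] := perm_split hp p2 e.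
    eapply (@der_Land _ S (L++r) (M++Del) a1 a2); try pcount.
    apply: der_perm (IH1 (a1::a2::r) _) _ _ _; pcount.
- eapply (@der_Ror _ S (L++G0) (M++Del) a1 a2); try pcount.
  apply: der_perm (IH1 G0 _) _ _ _; pcount.
- case: (eqVneq X (Or a1 a2)) => e.
  + move: (hp); rewrite e => hp'.
    apply: der_perm (hOr S G0 Del a1 a2 e _ _) _ _ _; sa.
  + have [r [r1 r2]] := perm_split hp p2 e.
    eapply (@der_Lor _ S (L++r) (M++Del) a1 a2); try pcount.
    * apply: der_perm (IH1 (a1::r) _) _ _ _; pcount.
    * apply: der_perm (IH2 (a2::r) _) _ _ _; pcount.
- eapply (@der_Rimp _ S (L++G0) (M++Del) a1 a2); try pcount.
  apply: der_perm (IH1 (a1::G0) _) _ _ _; pcount.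
- case: (eqVneq X (Imp a1 a2)) => e.
  + move: (hp); rewrite e => hp'.
    apply: der_perm (hImp S G0 Del a1 a2 e _ _) _ _ _; sa.
  + have [r [r1 r2]] := perm_split hp p2 e.
    eapply (@der_Limp _ S (L++r) (M++Del) a1 a2); try pcount.
    * apply: der_perm (IH1 r _) _ _ _; pcount.
    * apply: der_perm (IH2 (a2::r) _) _ _ _; pcount.
- eapply (@der_Rneg _ S (L++G0) (M++Del) a); try pcount.
  apply: der_perm (IH1 (a::G0) _) _ _ _; pcount.
- case: (eqVneq X (Neg a)) => e.
  + move: (hp); rewrite e => hp'.
    apply: der_perm (hNeg S G0 Del a e _) _ _ _; sa.
  + have [r [r1 r2]] := perm_split hp p2 e.
    eapply (@der_Lneg _ S (L++r) (M++Del) a); try pcount.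
    apply: der_perm (IH1 r _) _ _ _; pcount.
- by case: (notin_atoms hX hPi p2 hp).
- have e : X != Box G a by apply: contraNneq hXb => ->.
  have [r [r1 r2]] := perm_split hp p2 e.
  eapply (@der_DT _ S (L++r) (M++Del) G a); try pcount.
  apply: der_perm (IH1 (a::r) _) _ _ _; pcount.
Qed.
End S0.


Section S.
Variable Agt : finType.
Notation form := (form Agt).
Notation der := (@der Agt).
Notation Var := (@Var Agt).
Notation Bot := (@Bot Agt).

Lemma rinv_gen X L M (hX : ~~ isAtomBotBox X)
 (hAnd: forall S G D a1 a2, X = And a1 a2 -> der S G (a1::D) -> der S G (a2::D) -> der S (L++G) (M++D))
 (hOr: forall S G D a1 a2, X = Or a1 a2 -> der S G (a1::a2::D) -> der S (L++G) (M++D))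
 (hImp: forall S G D a1 a2, X = Imp a1 a2 -> der S (a1::G) (a2::D) -> der S (L++G) (M++D))
 (hNeg: forall S G D a, X = Neg a -> der S (a::G) D -> der S (L++G) (M++D)) :
 forall S G D, der S G D -> forall D0, perm_eq D (X::D0) -> der S (L++G) (M++D0).
Proof.
move=> S G D; elim=> {S G D}
 [S Gam Del p S' Gam' Del' hS p1 p2 p3
 |S Gam Del S' Gam' Del' hS p1 p2 p3
 |S Gam Del a1 a2 S' Gam' Del' d1 IH1 d2 IH2 p1 p2 p3
 |S Gam Del a1 a2 S' Gam' Del' d1 IH1 p1 p2 p3
 |S Gam Del a1 a2 S' Gam' Del' d1 IH1 p1 p2 p3
 |S Gam Del a1 a2 S' Gam' Del' d1 IH1 d2 IH2 p1 p2 p3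
 |S Gam Del a1 a2 S' Gam' Del' d1 IH1 p1 p2 p3
 |S Gam Del a1 a2 S' Gam' Del' d1 IH1 d2 IH2 p1 p2 p3
 |S Gam Del a S' Gam' Del' d1 IH1 p1 p2 p3
 |S Gam Del a S' Gam' Del' d1 IH1 p1 p2 p3
 |bs b G S Pi Om S' Gam' Del' d1 IH1 hbs hS hPi hOm p1 p2 p3
 |S Gam Del G a S' Gam' Del' d1 IH1 p1 p2 p3] D0 hp.
- apply: (@init_mem _ S' (L++Gam') (M++D0) p (isBox_perm p1 hS)).
  + by rewrite mem_cat (mem_perm p2) orbT.
  + rewrite mem_cat; apply/orP; right; apply: (mem_cons_neq hp (mem_perm p3)).
    by apply: contraNneq hX => <-.
- apply: bot_mem (isBox_perm p1 hS) _.
  by rewrite mem_cat (mem_perm p2) orbT.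
- case: (eqVneq X (And a1 a2)) => e.
  + move: (hp); rewrite e => hp'.
    apply: der_perm (hAnd S Gam D0 a1 a2 e _ _) _ _ _; sa.
  + have [r [r1 r2]] := perm_split hp p3 e.
    eapply (@der_Rand _ S (L++Gam) (M++r) a1 a2); try pcount.
    * apply: der_perm (IH1 (a1::r) _) _ _ _; pcount.
    * apply: der_perm (IH2 (a2::r) _) _ _ _; pcount.
- eapply (@der_Land _ S (L++Gam) (M++D0) a1 a2); try pcount.
  apply: der_perm (IH1 D0 _) _ _ _; pcount.
- case: (eqVneq X (Or a1 a2)) => e.
  + move: (hp); rewrite e => hp'.
    apply: der_perm (hOr S Gam D0 a1 a2 e _) _ _ _; sa.
  + have [r [r1 r2]] := perm_split hp p3 e.
    eapply (@der_Ror _ S (L++Gam) (M++r) a1 a2); try pcount.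
    apply: der_perm (IH1 (a1::a2::r) _) _ _ _; pcount.
- eapply (@der_Lor _ S (L++Gam) (M++D0) a1 a2); try pcount.
  + apply: der_perm (IH1 D0 _) _ _ _; pcount.
  + apply: der_perm (IH2 D0 _) _ _ _; pcount.
- case: (eqVneq X (Imp a1 a2)) => e.
  + move: (hp); rewrite e => hp'.
    apply: der_perm (hImp S Gam D0 a1 a2 e _) _ _ _; sa.
  + have [r [r1 r2]] := perm_split hp p3 e.
    eapply (@der_Rimp _ S (L++Gam) (M++r) a1 a2); try pcount.
    apply: der_perm (IH1 (a2::r) _) _ _ _; pcount.
- eapply (@der_Limp _ S (L++Gam) (M++D0) a1 a2); try pcount.
  + apply: der_perm (IH1 (a1::D0) _) _ _ _; pcount.
  + apply: der_perm (IH2 D0 _) _ _ _; pcount.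
- case: (eqVneq X (Neg a)) => e.
  + move: (hp); rewrite e => hp'.
    apply: der_perm (hNeg S Gam D0 a e _) _ _ _; sa.
  + have [r [r1 r2]] := perm_split hp p3 e.
    eapply (@der_Rneg _ S (L++Gam) (M++r) a); try pcount.
    apply: der_perm (IH1 r _) _ _ _; pcount.
- eapply (@der_Lneg _ S (L++Gam) (M++D0) a); try pcount.
  apply: der_perm (IH1 (a::D0) _) _ _ _; pcount.
- exfalso.
  have e : X != Box G b by apply: contraNneq hX => ->.
  have [r [r1 r2]] := perm_split hp p3 e.
  have : X \in Om by rewrite (perm_mem r2) inE eqxx.
  by move/(allP hOm); rewrite (negbTE hX).
- eapply (@der_DT _ S (L++Gam) (M++D0) G a); try pcount.
  apply: der_perm (IH1 D0 _) _ _ _; pcount.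
Qed.

Section Inst.
Variables (S G0 D : seq form) (a b : form).

Lemma invLand G : der S G D -> perm_eq G (And a b :: G0) -> der S (a :: b :: G0) D.
Proof.
move=> hd hp; apply: (linv_gen (X := And a b) (L := [:: a; b]) (M := [::])) hd _ hp => //.
by move=> ? ? ? ? ? [<- <-].
Qed.
Lemma invLor1 G : der S G D -> perm_eq G (Or a b :: G0) -> der S (a :: G0) D.
Proof.
move=> hd hp; apply: (linv_gen (X := Or a b) (L := [:: a]) (M := [::])) hd _ hp => //.
by move=> ? ? ? ? ? [<- <-].
Qed.
Lemma invLor2 G : der S G D -> perm_eq G (Or a b :: G0) -> der S (b :: G0) D.
Proof.
move=> hd hp; apply: (linv_gen (X := Or a b) (L := [:: b]) (M := [::])) hd _ hp => //.
by move=> ? ? ? ? ? [<- <-].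
Qed.
Lemma invLimp1 G : der S G D -> perm_eq G (Imp a b :: G0) -> der S G0 (a :: D).
Proof.
move=> hd hp; apply: (linv_gen (X := Imp a b) (L := [::]) (M := [:: a])) hd _ hp => //.
by move=> ? ? ? ? ? [<- <-].
Qed.
Lemma invLimp2 G : der S G D -> perm_eq G (Imp a b :: G0) -> der S (b :: G0) D.
Proof.
move=> hd hp; apply: (linv_gen (X := Imp a b) (L := [:: b]) (M := [::])) hd _ hp => //.
by move=> ? ? ? ? ? [<- <-].
Qed.
Lemma invLneg G : der S G D -> perm_eq G (Neg a :: G0) -> der S G0 (a :: D).
Proof.
move=> hd hp; apply: (linv_gen (X := Neg a) (L := [::]) (M := [:: a])) hd _ hp => //.
by move=> ? ? ? ? [<-].
Qed.
End Inst.

Section InstR.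
Variables (S G D0 : seq form) (a b : form).
Lemma invRand1 D : der S G D -> perm_eq D (And a b :: D0) -> der S G (a :: D0).
Proof.
move=> hd hp; apply: (rinv_gen (X := And a b) (L := [::]) (M := [:: a])) hd _ hp => //.
by move=> ? ? ? ? ? [<- <-].
Qed.
Lemma invRand2 D : der S G D -> perm_eq D (And a b :: D0) -> der S G (b :: D0).
Proof.
move=> hd hp; apply: (rinv_gen (X := And a b) (L := [::]) (M := [:: b])) hd _ hp => //.
by move=> ? ? ? ? ? [<- <-].
Qed.
Lemma invRor D : der S G D -> perm_eq D (Or a b :: D0) -> der S G (a :: b :: D0).
Proof.
move=> hd hp; apply: (rinv_gen (X := Or a b) (L := [::]) (M := [:: a; b])) hd _ hp => //.
by move=> ? ? ? ? ? [<- <-].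
Qed.
Lemma invRimp D : der S G D -> perm_eq D (Imp a b :: D0) -> der S (a :: G) (b :: D0).
Proof.
move=> hd hp; apply: (rinv_gen (X := Imp a b) (L := [:: a]) (M := [:: b])) hd _ hp => //.
by move=> ? ? ? ? ? [<- <-].
Qed.
Lemma invRneg D : der S G D -> perm_eq D (Neg a :: D0) -> der S (a :: G) D0.
Proof.
move=> hd hp; apply: (rinv_gen (X := Neg a) (L := [:: a]) (M := [::])) hd _ hp => //.
by move=> ? ? ? ? [<-].
Qed.
End InstR.

Lemma invDT H c : forall S G D, der S G D -> forall G0, perm_eq G (Box H c :: G0) ->
  der (Box H c :: S) (c :: G0) D.
Proof.
move=> S G D; elim=> {S G D}
 [S Gam Del p S' Gam' Del' hS p1 p2 p3
 |S Gam Del S' Gam' Del' hS p1 p2 p3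
 |S Gam Del a1 a2 S' Gam' Del' d1 IH1 d2 IH2 p1 p2 p3
 |S Gam Del a1 a2 S' Gam' Del' d1 IH1 p1 p2 p3
 |S Gam Del a1 a2 S' Gam' Del' d1 IH1 p1 p2 p3
 |S Gam Del a1 a2 S' Gam' Del' d1 IH1 d2 IH2 p1 p2 p3
 |S Gam Del a1 a2 S' Gam' Del' d1 IH1 p1 p2 p3
 |S Gam Del a1 a2 S' Gam' Del' d1 IH1 d2 IH2 p1 p2 p3
 |S Gam Del a S' Gam' Del' d1 IH1 p1 p2 p3
 |S Gam Del a S' Gam' Del' d1 IH1 p1 p2 p3
 |bs b G S Pi Om S' Gam' Del' d1 IH1 hbs hS hPi hOm p1 p2 p3
 |S Gam Del G a S' Gam' Del' d1 IH1 p1 p2 p3] G0 hp.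
- apply: (@init_mem _ (Box H c :: S') (c::G0) Del' p); first by rewrite /= (isBox_perm p1 hS).
  + by rewrite inE; apply/orP; right; apply: (mem_cons_neq hp (mem_perm p2)).
  + by rewrite (mem_perm p3).
- apply: bot_mem; first by rewrite /= (isBox_perm p1 hS).
  by rewrite inE; apply/orP; right; apply: (mem_cons_neq hp (mem_perm p2)).
- eapply (@der_Rand _ (Box H c :: S) (c::G0) Del a1 a2); try pcount.
  + apply: der_perm (IH1 G0 _) _ _ _; pcount.
  + apply: der_perm (IH2 G0 _) _ _ _; pcount.
- have [r [r1 r2]] := perm_split hp p2 isT.
  eapply (@der_Land _ (Box H c :: S) (c::r) Del a1 a2); try pcount.
  apply: der_perm (IH1 (a1::a2::r) _) _ _ _; pcount.
- eapply (@der_Ror _ (Box H c :: S) (c::G0) Del a1 a2); try pcount.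
  apply: der_perm (IH1 G0 _) _ _ _; pcount.
- have [r [r1 r2]] := perm_split hp p2 isT.
  eapply (@der_Lor _ (Box H c :: S) (c::r) Del a1 a2); try pcount.
  + apply: der_perm (IH1 (a1::r) _) _ _ _; pcount.
  + apply: der_perm (IH2 (a2::r) _) _ _ _; pcount.
- eapply (@der_Rimp _ (Box H c :: S) (c::G0) Del a1 a2); try pcount.
  apply: der_perm (IH1 (a1::G0) _) _ _ _; pcount.
- have [r [r1 r2]] := perm_split hp p2 isT.
  eapply (@der_Limp _ (Box H c :: S) (c::r) Del a1 a2); try pcount.
  + apply: der_perm (IH1 r _) _ _ _; pcount.
  + apply: der_perm (IH2 (a2::r) _) _ _ _; pcount.
- eapply (@der_Rneg _ (Box H c :: S) (c::G0) Del a); try pcount.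
  apply: der_perm (IH1 (a::G0) _) _ _ _; pcount.
- have [r [r1 r2]] := perm_split hp p2 isT.
  eapply (@der_Lneg _ (Box H c :: S) (c::r) Del a); try pcount.
  apply: der_perm (IH1 r _) _ _ _; pcount.
- by case: (notin_atoms (X := Box H c) isT hPi p2 hp).
- case: (eqVneq (Box H c) (Box G a)) => e.
  + case: e => eH eC; subst G a; apply: der_perm d1 _ _ _; pcount.
  + have [r [r1 r2]] := perm_split hp p2 e.
    eapply (@der_DT _ (Box H c :: S) (c::r) Del G a); try pcount.
    apply: der_perm (IH1 (a::r) _) _ _ _; pcount.
Qed.
End S.


Section S.
Variable Agt : finType.
Notation form := (form Agt).
Notation der := (@der Agt).
Notation Var := (@Var Agt).
Notation Bot := (@Bot Agt).

Lemma perm_split2 (x y : form) s t u : perm_eq u (x::x::s) -> perm_eq u (y::t) -> x != y ->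
  exists r, perm_eq s (y::r) /\ perm_eq t (x::x::r).
Proof.
move=> h1 h2 ne.
have [r1 [q1 q2]] := perm_split h1 h2 ne.
have [r2 [q3 q4]] := perm_split (perm_refl (x :: s)) q1 ne.
exists r2; split => //; pcount.
Qed.

Lemma ab_neq (P : pred form) (A Y : form) : P A -> ~~ P Y -> A != Y.
Proof. by move=> h1; apply: contraNneq => <-. Qed.

Lemma perm_split2P (P : pred form) (x y : form) s t u : perm_eq u (x::x::s) -> perm_eq u (y::t) ->
  P x -> ~~ P y -> exists r, perm_eq s (y::r) /\ perm_eq t (x::x::r).
Proof. by move=> h1 h2 hx hy; apply: perm_split2 h1 h2 (ab_neq hx hy). Qed.

Lemma mem2 (x y : form) u s : perm_eq u (y :: y :: s) -> x \in u -> x \in y :: s.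
Proof. by move=> h; rewrite (perm_mem h) !inE => /orP [->|->] //; rewrite orbT. Qed.

Lemma lcontr_ab A : isAtomBot A -> forall S G D, der S G D -> forall G0,
  perm_eq G (A :: A :: G0) -> der S (A :: G0) D.
Proof.
move=> hA S G D; elim=> {S G D}
 [S Gam Del p S' Gam' Del' hS p1 p2 p3
 |S Gam Del S' Gam' Del' hS p1 p2 p3
 |S Gam Del a1 a2 S' Gam' Del' d1 IH1 d2 IH2 p1 p2 p3
 |S Gam Del a1 a2 S' Gam' Del' d1 IH1 p1 p2 p3
 |S Gam Del a1 a2 S' Gam' Del' d1 IH1 p1 p2 p3
 |S Gam Del a1 a2 S' Gam' Del' d1 IH1 d2 IH2 p1 p2 p3
 |S Gam Del a1 a2 S' Gam' Del' d1 IH1 p1 p2 p3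
 |S Gam Del a1 a2 S' Gam' Del' d1 IH1 d2 IH2 p1 p2 p3
 |S Gam Del a S' Gam' Del' d1 IH1 p1 p2 p3
 |S Gam Del a S' Gam' Del' d1 IH1 p1 p2 p3
 |bs b G S Pi Om S' Gam' Del' d1 IH1 hbs hS hPi hOm p1 p2 p3
 |S Gam Del G a S' Gam' Del' d1 IH1 p1 p2 p3] G0 hp.
- apply: (@init_mem _ S' (A::G0) Del' p (isBox_perm p1 hS)).
  + exact: mem2 hp (mem_perm p2).
  + by rewrite (mem_perm p3).
- apply: bot_mem (isBox_perm p1 hS) _.
  exact: mem2 hp (mem_perm p2).
- eapply (@der_Rand _ S (A::G0) Del a1 a2); try pcount.
  + apply: der_perm (IH1 G0 _) _ _ _; pcount.
  + apply: der_perm (IH2 G0 _) _ _ _; pcount.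
- have [r [r1 r2]] := perm_split2P hp p2 hA isT.
  eapply (@der_Land _ S (A::r) Del a1 a2); try pcount.
  apply: der_perm (IH1 (a1::a2::r) _) _ _ _; pcount.
- eapply (@der_Ror _ S (A::G0) Del a1 a2); try pcount.
  apply: der_perm (IH1 G0 _) _ _ _; pcount.
- have [r [r1 r2]] := perm_split2P hp p2 hA isT.
  eapply (@der_Lor _ S (A::r) Del a1 a2); try pcount.
  + apply: der_perm (IH1 (a1::r) _) _ _ _; pcount.
  + apply: der_perm (IH2 (a2::r) _) _ _ _; pcount.
- eapply (@der_Rimp _ S (A::G0) Del a1 a2); try pcount.
  apply: der_perm (IH1 (a1::G0) _) _ _ _; pcount.
- have [r [r1 r2]] := perm_split2P hp p2 hA isT.
  eapply (@der_Limp _ S (A::r) Del a1 a2); try pcount.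
  + apply: der_perm (IH1 r _) _ _ _; pcount.
  + apply: der_perm (IH2 (a2::r) _) _ _ _; pcount.
- eapply (@der_Rneg _ S (A::G0) Del a); try pcount.
  apply: der_perm (IH1 (a::G0) _) _ _ _; pcount.
- have [r [r1 r2]] := perm_split2P hp p2 hA isT.
  eapply (@der_Lneg _ S (A::r) Del a); try pcount.
  apply: der_perm (IH1 r _) _ _ _; pcount.
- have [hb hbx] := DK_canon d1 hbs hS p1.
  apply: (der_perm (S := S') (G := A :: G0) (D := Box G b :: Om)); try pcount.
  apply: DKc => //.
  move: hPi; rewrite -(perm_all _ p2) (perm_all _ hp) /= => /andP [_ ->].
  done.
- have [r [r1 r2]] := perm_split2P hp p2 hA isT.
  eapply (@der_DT _ S (A::r) Del G a); try pcount.
  apply: der_perm (IH1 (a::r) _) _ _ _; pcount.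
Qed.

Lemma rcontr_abb A : isAtomBotBox A -> forall S G D, der S G D -> forall D0,
  perm_eq D (A :: A :: D0) -> der S G (A :: D0).
Proof.
move=> hA S G D; elim=> {S G D}
 [S Gam Del p S' Gam' Del' hS p1 p2 p3
 |S Gam Del S' Gam' Del' hS p1 p2 p3
 |S Gam Del a1 a2 S' Gam' Del' d1 IH1 d2 IH2 p1 p2 p3
 |S Gam Del a1 a2 S' Gam' Del' d1 IH1 p1 p2 p3
 |S Gam Del a1 a2 S' Gam' Del' d1 IH1 p1 p2 p3
 |S Gam Del a1 a2 S' Gam' Del' d1 IH1 d2 IH2 p1 p2 p3
 |S Gam Del a1 a2 S' Gam' Del' d1 IH1 p1 p2 p3
 |S Gam Del a1 a2 S' Gam' Del' d1 IH1 d2 IH2 p1 p2 p3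
 |S Gam Del a S' Gam' Del' d1 IH1 p1 p2 p3
 |S Gam Del a S' Gam' Del' d1 IH1 p1 p2 p3
 |bs b G S Pi Om S' Gam' Del' d1 IH1 hbs hS hPi hOm p1 p2 p3
 |S Gam Del G a S' Gam' Del' d1 IH1 p1 p2 p3] D0 hp.
- apply: (@init_mem _ S' Gam' (A::D0) p (isBox_perm p1 hS)).
  + by rewrite (mem_perm p2).
  + exact: mem2 hp (mem_perm p3).
- apply: bot_mem (isBox_perm p1 hS) _.
  by rewrite (mem_perm p2).
- have [r [r1 r2]] := perm_split2P hp p3 hA isT.
  eapply (@der_Rand _ S Gam (A::r) a1 a2); try pcount.
  + apply: der_perm (IH1 (a1::r) _) _ _ _; pcount.
  + apply: der_perm (IH2 (a2::r) _) _ _ _; pcount.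
- eapply (@der_Land _ S Gam (A::D0) a1 a2); try pcount.
  apply: der_perm (IH1 D0 _) _ _ _; pcount.
- have [r [r1 r2]] := perm_split2P hp p3 hA isT.
  eapply (@der_Ror _ S Gam (A::r) a1 a2); try pcount.
  apply: der_perm (IH1 (a1::a2::r) _) _ _ _; pcount.
- eapply (@der_Lor _ S Gam (A::D0) a1 a2); try pcount.
  + apply: der_perm (IH1 D0 _) _ _ _; pcount.
  + apply: der_perm (IH2 D0 _) _ _ _; pcount.
- have [r [r1 r2]] := perm_split2P hp p3 hA isT.
  eapply (@der_Rimp _ S Gam (A::r) a1 a2); try pcount.
  apply: der_perm (IH1 (a2::r) _) _ _ _; pcount.
- eapply (@der_Limp _ S Gam (A::D0) a1 a2); try pcount.
  + apply: der_perm (IH1 (a1::D0) _) _ _ _; pcount.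
  + apply: der_perm (IH2 D0 _) _ _ _; pcount.
- have [r [r1 r2]] := perm_split2P hp p3 hA isT.
  eapply (@der_Rneg _ S Gam (A::r) a); try pcount.
  apply: der_perm (IH1 r _) _ _ _; pcount.
- eapply (@der_Lneg _ S Gam (A::D0) a); try pcount.
  apply: der_perm (IH1 (a::D0) _) _ _ _; pcount.
- have [hb hbx] := DK_canon d1 hbs hS p1.
  have hPi' : all (@isAtomBot Agt) Gam' by rewrite (perm_all _ p2).
  case: (eqVneq A (Box G b)) => e.
  + have hO : perm_eq Om (A :: D0) by move: hp p3; rewrite e => hp p3; pcount.
    have hD0 : all (@isAtomBotBox Agt) D0.
      by move: hOm; rewrite (perm_all _ hO) => /andP [].
    rewrite e; exact: DKc.
  + have [r [r1 r2]] := perm_split2 hp p3 e.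
    apply: (der_perm (S := S') (G := Gam') (D := Box G b :: A :: r)); try pcount.
    apply: DKc => //.
    by move: hOm; rewrite (perm_all _ r2) /= => /andP [_ ->].
- eapply (@der_DT _ S Gam (A::D0) G a); try pcount.
  apply: der_perm (IH1 D0 _) _ _ _; pcount.
Qed.

Lemma scontr H c : (forall X b, der [::] (c :: c :: X) [:: b] -> der [::] (c :: X) [:: b]) ->
  forall S G D, der S G D -> forall S0,
  perm_eq S (Box H c :: Box H c :: S0) -> der (Box H c :: S0) G D.
Proof.
move=> hc S G D; elim=> {S G D}
 [S Gam Del p S' Gam' Del' hS p1 p2 p3
 |S Gam Del S' Gam' Del' hS p1 p2 p3
 |S Gam Del a1 a2 S' Gam' Del' d1 IH1 d2 IH2 p1 p2 p3
 |S Gam Del a1 a2 S' Gam' Del' d1 IH1 p1 p2 p3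
 |S Gam Del a1 a2 S' Gam' Del' d1 IH1 p1 p2 p3
 |S Gam Del a1 a2 S' Gam' Del' d1 IH1 d2 IH2 p1 p2 p3
 |S Gam Del a1 a2 S' Gam' Del' d1 IH1 p1 p2 p3
 |S Gam Del a1 a2 S' Gam' Del' d1 IH1 d2 IH2 p1 p2 p3
 |S Gam Del a S' Gam' Del' d1 IH1 p1 p2 p3
 |S Gam Del a S' Gam' Del' d1 IH1 p1 p2 p3
 |bs b G S Pi Om S' Gam' Del' d1 IH1 hbs hS hPi hOm p1 p2 p3
 |S Gam Del G a S' Gam' Del' d1 IH1 p1 p2 p3] S0 hp.
- have hb : all (@isBox Agt) (Box H c :: S0).
    by move: (isBox_perm p1 hS); rewrite (perm_all _ hp).
  exact: (@init_mem _ _ _ _ p hb (mem_perm p2) (mem_perm p3)).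
- have hb : all (@isBox Agt) (Box H c :: S0).
    by move: (isBox_perm p1 hS); rewrite (perm_all _ hp).
  apply: bot_mem hb _; exact: mem_perm p2.
- eapply (@der_Rand _ (Box H c :: S0) Gam Del a1 a2); try pcount.
  + apply: IH1; pcount.
  + apply: IH2; pcount.
- eapply (@der_Land _ (Box H c :: S0) Gam Del a1 a2); try pcount.
  apply: IH1; pcount.
- eapply (@der_Ror _ (Box H c :: S0) Gam Del a1 a2); try pcount.
  apply: IH1; pcount.
- eapply (@der_Lor _ (Box H c :: S0) Gam Del a1 a2); try pcount.
  + apply: IH1; pcount.
  + apply: IH2; pcount.
- eapply (@der_Rimp _ (Box H c :: S0) Gam Del a1 a2); try pcount.
  apply: IH1; pcount.
- eapply (@der_Limp _ (Box H c :: S0) Gam Del a1 a2); try pcount.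
  + apply: IH1; pcount.
  + apply: IH2; pcount.
- eapply (@der_Rneg _ (Box H c :: S0) Gam Del a); try pcount.
  apply: IH1; pcount.
- eapply (@der_Lneg _ (Box H c :: S0) Gam Del a); try pcount.
  apply: IH1; pcount.
- have [hb hbx] := DK_canon d1 hbs hS p1.
  apply: (der_perm (S := Box H c :: S0) (G := Pi) (D := Box G b :: Om)); try pcount.
  apply: DKc => //.
  + by move: hbx; rewrite (perm_all _ hp).
  + have := bb_perm G hp; rewrite !bb_cons /=.
    case: (gset H \subset gset G) => hq.
    * apply: hc; apply: der_perm hb _ _ _ => //; by rewrite perm_sym.
    * apply: der_perm hb _ _ _ => //; by rewrite perm_sym.
- apply: (@der_DT _ (Box H c :: S0) Gam Del G a) => //; try pcount.
  apply: der_perm (IH1 (Box G a :: S0) _) _ _ _; pcount.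
Qed.
End S.


Section S.
Variable Agt : finType.
Notation form := (form Agt).
Notation der := (@der Agt).
Notation Var := (@Var Agt).
Notation Bot := (@Bot Agt).

Lemma contrLR A : (forall S G D, der S (A :: A :: G) D -> der S (A :: G) D) /\
                  (forall S G D, der S G (A :: A :: D) -> der S G (A :: D)).
Proof.
elim: A.
- move=> p; split => S G D hd.
  + exact: (lcontr_ab (A := Var p) isT hd (perm_refl _)).
  + exact: (rcontr_abb (A := Var p) isT hd (perm_refl _)).
- split => S G D hd.
  + exact: (lcontr_ab (A := Bot) isT hd (perm_refl _)).
  + exact: (rcontr_abb (A := Bot) isT hd (perm_refl _)).
- move=> a [La Ra] b [Lb Rb]; split => S G D hd.
  + have h1 : der S [:: a, b, And a b & G] D by apply: (invLand hd); pcount.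
    have h2 : der S [:: a, b, a, b & G] D by apply: (invLand h1); pcount.
    eapply (@der_Land _ S G D a b); try pcount.
    apply: La; apply: der_perm (Lb S [:: a, a & G] D _) _ _ _; try pcount.
    apply: der_perm h2 _ _ _; pcount.
  + eapply (@der_Rand _ S G D a b); try pcount.
    * have h1 : der S G [:: a, And a b & D] by apply: (invRand1 (b:=b) hd); pcount.
      have h2 : der S G [:: a, a & D] by apply: (invRand1 (b:=b) h1); pcount.
      exact: Ra.
    * have h1 : der S G [:: b, And a b & D] by apply: (invRand2 (a:=a) hd); pcount.
      have h2 : der S G [:: b, b & D] by apply: (invRand2 (a:=a) h1); pcount.
      exact: Rb.
- move=> a [La Ra] b [Lb Rb]; split => S G D hd.
  + eapply (@der_Lor _ S G D a b); try pcount.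
    * have h1 : der S [:: a, Or a b & G] D by apply: (invLor1 (b:=b) hd); pcount.
      have h2 : der S [:: a, a & G] D by apply: (invLor1 (b:=b) h1); pcount.
      exact: La.
    * have h1 : der S [:: b, Or a b & G] D by apply: (invLor2 (a:=a) hd); pcount.
      have h2 : der S [:: b, b & G] D by apply: (invLor2 (a:=a) h1); pcount.
      exact: Lb.
  + have h1 : der S G [:: a, b, Or a b & D] by apply: (invRor hd); pcount.
    have h2 : der S G [:: a, b, a, b & D] by apply: (invRor h1); pcount.
    eapply (@der_Ror _ S G D a b); try pcount.
    apply: Ra; apply: der_perm (Rb S G [:: a, a & D] _) _ _ _; try pcount.
    apply: der_perm h2 _ _ _; pcount.
- move=> a [La Ra] b [Lb Rb]; split => S G D hd.
  + eapply (@der_Limp _ S G D a b); try pcount.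
    * have h1 : der S [:: Imp a b & G] (a :: D) by apply: (invLimp1 (b:=b) hd); pcount.
      have h2 : der S G [:: a, a & D] by apply: (invLimp1 (b:=b) h1); pcount.
      exact: Ra.
    * have h1 : der S [:: b, Imp a b & G] D by apply: (invLimp2 (a:=a) hd); pcount.
      have h2 : der S [:: b, b & G] D by apply: (invLimp2 (a:=a) h1); pcount.
      exact: Lb.
  + eapply (@der_Rimp _ S G D a b); try pcount.
    have h1 : der S (a :: G) [:: b, Imp a b & D] by apply: (invRimp hd); pcount.
    have h2 : der S [:: a, a & G] [:: b, b & D].
      by apply: der_perm (invRimp (a:=a) (b:=b) (D0 := b :: D) h1 _) _ _ _; pcount.
    apply: La; apply: Rb; exact: h2.
- move=> a [La Ra]; split => S G D hd.
  + eapply (@der_Lneg _ S G D a); try pcount.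
    have h1 : der S [:: Neg a & G] (a :: D) by apply: (invLneg hd); pcount.
    have h2 : der S G [:: a, a & D] by apply: (invLneg h1); pcount.
    exact: Ra.
  + eapply (@der_Rneg _ S G D a); try pcount.
    have h1 : der S (a :: G) (Neg a :: D) by apply: (invRneg hd); pcount.
    have h2 : der S [:: a, a & G] D by apply: der_perm (invRneg (a:=a) (D0 := D) h1 _) _ _ _; pcount.
    exact: La.
- move=> H c [Lc Rc]; split => S G D hd.
  + eapply (@der_DT _ S G D H c); try pcount.
    have h1 : der (Box H c :: S) [:: c, Box H c & G] D by apply: (invDT hd); pcount.
    have h2 : der [:: Box H c, Box H c & S] [:: c, c & G] D.
      by apply: der_perm (invDT (H:=H) (c:=c) h1 (G0 := c :: G) _) _ _ _; pcount.
    apply: (scontr (H := H) (c := c) _ (Lc _ _ _ h2) (perm_refl _)).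
    by move=> X b; apply: Lc.
  + exact: (rcontr_abb (A := Box H c) isT hd (perm_refl _)).
Qed.

Lemma contrL A S G D : der S (A :: A :: G) D -> der S (A :: G) D.
Proof. exact: (contrLR A).1. Qed.
Lemma contrR A S G D : der S G (A :: A :: D) -> der S G (A :: D).
Proof. exact: (contrLR A).2. Qed.

Lemma contrLs X S G D : der S (X ++ X ++ G) D -> der S (X ++ G) D.
Proof.
elim: X G => //= x l IH G hd.
have h1 : der S (x :: x :: l ++ l ++ G) D by apply: der_perm hd _ _ _; pcount.
have h2 := contrL h1.
apply: der_perm (IH (x :: G) _) _ _ _; try pcount.
apply: der_perm h2 _ _ _; pcount.
Qed.
Lemma contrRs X S G D : der S G (X ++ X ++ D) -> der S G (X ++ D).
Proof.
elim: X D => //= x l IH D hd.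
have h1 : der S G (x :: x :: l ++ l ++ D) by apply: der_perm hd _ _ _; pcount.
have h2 := contrR h1.
apply: der_perm (IH (x :: D) _) _ _ _; try pcount.
apply: der_perm h2 _ _ _; pcount.
Qed.
End S.


Section S.
Variable Agt : finType.
Notation form := (form Agt).
Notation der := (@der Agt).
Notation Var := (@Var Agt).
Notation Bot := (@Bot Agt).

Lemma rbot S G D : der S G D -> forall D0, perm_eq D (Bot :: D0) -> der S G D0.
Proof.
elim=> {S G D}
 [S Gam Del p S' Gam' Del' hS p1 p2 p3
 |S Gam Del S' Gam' Del' hS p1 p2 p3
 |S Gam Del a1 a2 S' Gam' Del' d1 IH1 d2 IH2 p1 p2 p3
 |S Gam Del a1 a2 S' Gam' Del' d1 IH1 p1 p2 p3
 |S Gam Del a1 a2 S' Gam' Del' d1 IH1 p1 p2 p3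
 |S Gam Del a1 a2 S' Gam' Del' d1 IH1 d2 IH2 p1 p2 p3
 |S Gam Del a1 a2 S' Gam' Del' d1 IH1 p1 p2 p3
 |S Gam Del a1 a2 S' Gam' Del' d1 IH1 d2 IH2 p1 p2 p3
 |S Gam Del a S' Gam' Del' d1 IH1 p1 p2 p3
 |S Gam Del a S' Gam' Del' d1 IH1 p1 p2 p3
 |bs b G S Pi Om S' Gam' Del' d1 IH1 hbs hS hPi hOm p1 p2 p3
 |S Gam Del G a S' Gam' Del' d1 IH1 p1 p2 p3] D0 hp.
- apply: (@init_mem _ S' Gam' D0 p (isBox_perm p1 hS)).
  + by rewrite (mem_perm p2).
  + exact: (mem_cons_neq hp (mem_perm p3)).
- apply: bot_mem (isBox_perm p1 hS) _.
  by rewrite (mem_perm p2).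
- have [r [r1 r2]] := perm_split hp p3 isT.
  eapply (@der_Rand _ S Gam r a1 a2); try pcount.
  + apply: IH1; pcount.
  + apply: IH2; pcount.
- eapply (@der_Land _ S Gam D0 a1 a2); try pcount.
  apply: IH1; pcount.
- have [r [r1 r2]] := perm_split hp p3 isT.
  eapply (@der_Ror _ S Gam r a1 a2); try pcount.
  apply: IH1; pcount.
- eapply (@der_Lor _ S Gam D0 a1 a2); try pcount.
  + apply: IH1; pcount.
  + apply: IH2; pcount.
- have [r [r1 r2]] := perm_split hp p3 isT.
  eapply (@der_Rimp _ S Gam r a1 a2); try pcount.
  apply: IH1; pcount.
- eapply (@der_Limp _ S Gam D0 a1 a2); try pcount.
  + apply: IH1; pcount.
  + apply: IH2; pcount.
- have [r [r1 r2]] := perm_split hp p3 isT.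
  eapply (@der_Rneg _ S Gam r a); try pcount.
  apply: IH1; pcount.
- eapply (@der_Lneg _ S Gam D0 a); try pcount.
  apply: IH1; pcount.
- have [hb hbx] := DK_canon d1 hbs hS p1.
  have [r [r1 r2]] := perm_split hp p3 isT.
  apply: (der_perm (S := S') (G := Gam') (D := Box G b :: r)); try pcount.
  apply: DKc => //; first by rewrite (perm_all _ p2).
  by move: hOm; rewrite (perm_all _ r2); case/andP.
- eapply (@der_DT _ S Gam D0 G a); try pcount.
  apply: IH1; pcount.
Qed.

Definition bodies (S : seq form) := map (@body Agt) S.

Lemma bodies_split K S : perm_eq (bodies S) (bb K S ++ [seq body x | x <- S & ~~ below K x]).
Proof.
rewrite /bodies /bb; elim: S => //= x l IH.
case: (below K x) => /=; first by rewrite perm_cons.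
move: IH; set A := map _ _; set B := map _ _; set C := map _ _ => IH; pcount.
Qed.

Lemma Tadm S G D : der S G D -> forall D0 H c, perm_eq D (Box H c :: D0) ->
  der S (bodies S ++ G) (c :: D0).
Proof.
elim=> {S G D}
 [S Gam Del p S' Gam' Del' hS p1 p2 p3
 |S Gam Del S' Gam' Del' hS p1 p2 p3
 |S Gam Del a1 a2 S' Gam' Del' d1 IH1 d2 IH2 p1 p2 p3
 |S Gam Del a1 a2 S' Gam' Del' d1 IH1 p1 p2 p3
 |S Gam Del a1 a2 S' Gam' Del' d1 IH1 p1 p2 p3
 |S Gam Del a1 a2 S' Gam' Del' d1 IH1 d2 IH2 p1 p2 p3
 |S Gam Del a1 a2 S' Gam' Del' d1 IH1 p1 p2 p3
 |S Gam Del a1 a2 S' Gam' Del' d1 IH1 d2 IH2 p1 p2 p3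
 |S Gam Del a S' Gam' Del' d1 IH1 p1 p2 p3
 |S Gam Del a S' Gam' Del' d1 IH1 p1 p2 p3
 |bs b G S Pi Om S' Gam' Del' d1 IH1 hbs hS hPi hOm p1 p2 p3
 |S Gam Del G a S' Gam' Del' d1 IH1 p1 p2 p3] D0 H c hp;
 try (have pb := perm_map (@body Agt) p1; rewrite -/(bodies S') -/(bodies S) in pb).
- apply: (@init_mem _ S' _ _ p (isBox_perm p1 hS)).
  + by rewrite mem_cat (mem_perm p2) orbT.
  + by rewrite inE (mem_cons_neq hp (mem_perm p3)) ?orbT.
- apply: bot_mem (isBox_perm p1 hS) _.
  by rewrite mem_cat (mem_perm p2) orbT.
- have [r [r1 r2]] := perm_split hp p3 isT.
  eapply (@der_Rand _ S (bodies S ++ Gam) (c :: r) a1 a2); try pcount.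
  + apply: der_perm (IH1 (a1 :: r) H c _) _ _ _; pcount.
  + apply: der_perm (IH2 (a2 :: r) H c _) _ _ _; pcount.
- eapply (@der_Land _ S (bodies S ++ Gam) (c :: D0) a1 a2); try pcount.
  apply: der_perm (IH1 D0 H c _) _ _ _; pcount.
- have [r [r1 r2]] := perm_split hp p3 isT.
  eapply (@der_Ror _ S (bodies S ++ Gam) (c :: r) a1 a2); try pcount.
  apply: der_perm (IH1 (a1 :: a2 :: r) H c _) _ _ _; pcount.
- eapply (@der_Lor _ S (bodies S ++ Gam) (c :: D0) a1 a2); try pcount.
  + apply: der_perm (IH1 D0 H c _) _ _ _; pcount.
  + apply: der_perm (IH2 D0 H c _) _ _ _; pcount.
- have [r [r1 r2]] := perm_split hp p3 isT.
  eapply (@der_Rimp _ S (bodies S ++ Gam) (c :: r) a1 a2); try pcount.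
  apply: der_perm (IH1 (a2 :: r) H c _) _ _ _; pcount.
- eapply (@der_Limp _ S (bodies S ++ Gam) (c :: D0) a1 a2); try pcount.
  + apply: der_perm (IH1 (a1 :: D0) H c _) _ _ _; pcount.
  + apply: der_perm (IH2 D0 H c _) _ _ _; pcount.
- have [r [r1 r2]] := perm_split hp p3 isT.
  eapply (@der_Rneg _ S (bodies S ++ Gam) (c :: r) a); try pcount.
  apply: der_perm (IH1 r H c _) _ _ _; pcount.
- eapply (@der_Lneg _ S (bodies S ++ Gam) (c :: D0) a); try pcount.
  apply: der_perm (IH1 (a :: D0) H c _) _ _ _; pcount.
- have [hb hbx] := DK_canon d1 hbs hS p1.
  case: (eqVneq (Box H c) (Box G b)) => e.
  + case: e => eH ec; subst H c.
    have q := bodies_split G S'.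
    have := weak_all (S1 := S') ([seq body x | x <- S' & ~~ below G x] ++ Gam') D0 hbx hb.
    move=> h; apply: der_perm h _ _ _ => //; try pcount.
  + have [r [r1 r2]] := perm_split hp p3 e.
    have h : der S' Gam' (Box G b :: r).
      apply: DKc => //; first by rewrite (perm_all _ p2).
      by move: hOm; rewrite (perm_all _ r2); case/andP.
    have := weak_all (S1 := [::]) (bodies S') [:: c] isT h.
    move=> h'; apply: der_perm h' _ _ _ => //; pcount.
- have h1 : der (Box G a :: S) (a :: bodies S ++ a :: Gam) (c :: D0).
    have hq : perm_eq Del (Box H c :: D0) by pcount.
    move: (IH1 D0 H c hq) => /=; apply.
  have h2 : der (Box G a :: S) (a :: a :: bodies S ++ Gam) (c :: D0).
    by apply: der_perm h1 _ _ _; pcount.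
  have h3 := contrL h2.
  eapply (@der_DT _ S (bodies S ++ Gam) (c :: D0) G a); try pcount.
  exact: h3.
Qed.
End S.


Section S.
Variable Agt : finType.
Notation form := (form Agt).
Notation der := (@der Agt).
Notation Var := (@Var Agt).
Notation Bot := (@Bot Agt).

Lemma acut p S G D : der S G D -> forall D0, perm_eq D (Var p :: D0) ->
  forall S2 G2 D2, der S2 (Var p :: G2) D2 -> der (S2 ++ S) (G ++ G2) (D0 ++ D2).
Proof.
elim=> {S G D}
 [S Gam Del q S' Gam' Del' hS p1 p2 p3
 |S Gam Del S' Gam' Del' hS p1 p2 p3
 |S Gam Del a1 a2 S' Gam' Del' d1 IH1 d2 IH2 p1 p2 p3
 |S Gam Del a1 a2 S' Gam' Del' d1 IH1 p1 p2 p3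
 |S Gam Del a1 a2 S' Gam' Del' d1 IH1 p1 p2 p3
 |S Gam Del a1 a2 S' Gam' Del' d1 IH1 d2 IH2 p1 p2 p3
 |S Gam Del a1 a2 S' Gam' Del' d1 IH1 p1 p2 p3
 |S Gam Del a1 a2 S' Gam' Del' d1 IH1 d2 IH2 p1 p2 p3
 |S Gam Del a S' Gam' Del' d1 IH1 p1 p2 p3
 |S Gam Del a S' Gam' Del' d1 IH1 p1 p2 p3
 |bs b G S Pi Om S' Gam' Del' d1 IH1 hbs hS hPi hOm p1 p2 p3
 |S Gam Del G a S' Gam' Del' d1 IH1 p1 p2 p3] D0 hp S2 G2 D2 P2;
 have hS2 := der_isBox P2.
- have hS' := isBox_perm p1 hS.
  case hin: (Var p \in Gam').
  + have q1 := perm_to_rem hin.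
    have := weak_all (S1 := S') (rem (Var p) Gam') D0 hS' P2.
    move=> h; apply: der_perm h _ _ _; pcount.
  + have ne : Var q != Var p.
      by apply: contraFneq hin => <-; rewrite (mem_perm p2).
    apply: (@init_mem _ _ _ _ q); first by rewrite all_cat hS2.
    * by rewrite mem_cat (mem_perm p2).
    * by rewrite mem_cat (mem_cons_neq hp (mem_perm p3)).
- apply: bot_mem; first by rewrite all_cat hS2 (isBox_perm p1 hS).
  by rewrite mem_cat (mem_perm p2).
- have [r [r1 r2]] := perm_split hp p3 isT.
  eapply (@der_Rand _ (S2 ++ S) (Gam ++ G2) (r ++ D2) a1 a2); try pcount.
  + apply: der_perm (IH1 (a1 :: r) _ _ _ _ P2) _ _ _; pcount.
  + apply: der_perm (IH2 (a2 :: r) _ _ _ _ P2) _ _ _; pcount.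
- eapply (@der_Land _ (S2 ++ S) (Gam ++ G2) (D0 ++ D2) a1 a2); try pcount.
  apply: der_perm (IH1 D0 _ _ _ _ P2) _ _ _; pcount.
- have [r [r1 r2]] := perm_split hp p3 isT.
  eapply (@der_Ror _ (S2 ++ S) (Gam ++ G2) (r ++ D2) a1 a2); try pcount.
  apply: der_perm (IH1 (a1 :: a2 :: r) _ _ _ _ P2) _ _ _; pcount.
- eapply (@der_Lor _ (S2 ++ S) (Gam ++ G2) (D0 ++ D2) a1 a2); try pcount.
  + apply: der_perm (IH1 D0 _ _ _ _ P2) _ _ _; pcount.
  + apply: der_perm (IH2 D0 _ _ _ _ P2) _ _ _; pcount.
- have [r [r1 r2]] := perm_split hp p3 isT.
  eapply (@der_Rimp _ (S2 ++ S) (Gam ++ G2) (r ++ D2) a1 a2); try pcount.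
  apply: der_perm (IH1 (a2 :: r) _ _ _ _ P2) _ _ _; pcount.
- eapply (@der_Limp _ (S2 ++ S) (Gam ++ G2) (D0 ++ D2) a1 a2); try pcount.
  + apply: der_perm (IH1 (a1 :: D0) _ _ _ _ P2) _ _ _; pcount.
  + apply: der_perm (IH2 D0 _ _ _ _ P2) _ _ _; pcount.
- have [r [r1 r2]] := perm_split hp p3 isT.
  eapply (@der_Rneg _ (S2 ++ S) (Gam ++ G2) (r ++ D2) a); try pcount.
  apply: der_perm (IH1 r _ _ _ _ P2) _ _ _; pcount.
- eapply (@der_Lneg _ (S2 ++ S) (Gam ++ G2) (D0 ++ D2) a); try pcount.
  apply: der_perm (IH1 (a :: D0) _ _ _ _ P2) _ _ _; pcount.
- have [hb hbx] := DK_canon d1 hbs hS p1.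
  have [r [r1 r2]] := perm_split hp p3 isT.
  have h : der S' Gam' (Box G b :: r).
    apply: DKc => //; first by rewrite (perm_all _ p2).
    by move: hOm; rewrite (perm_all _ r2); case/andP.
  have := weak_all (S1 := S2) G2 D2 hS2 h.
  move=> h'; apply: der_perm h' _ _ _; pcount.
- eapply (@der_DT _ (S2 ++ S) (Gam ++ G2) (D0 ++ D2) G a); try pcount.
  apply: der_perm (IH1 D0 _ _ _ _ P2) _ _ _; pcount.
Qed.

Lemma bb_sub G K S : gset G \subset gset K ->
  perm_eq (bb K S) (bb G S ++ [seq @body Agt x | x <- S & below K x && ~~ below G x]).
Proof.
move=> hGK; elim: S => //= x l IH.
rewrite !bb_cons.
case hG: (below G x).
- have -> : below K x.
    by case: x hG => //= H a hH; apply: subset_trans hH hGK.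
  by rewrite /= perm_cons.
- case: (below K x) => //=.
  move: IH; set A := bb K l; set B := bb G l; set C := map _ _ => IH; pcount.
Qed.

Definition Cut1 (lam : form) := forall Gm Dl G' D', der [::] Gm (lam :: Dl) ->
  der [::] (lam :: G') D' -> der [::] (Gm ++ G') (Dl ++ D').

Lemma cut2_dk G lam (Hc1 : Cut1 lam) K b S' Pi Om (hGK : gset G \subset gset K)
  (hb : der [::] (lam :: bb K S') [:: b]) (hS' : all (@isBox Agt) S')
  (hPi : all (@isAtomBot Agt) Pi) (hOm : all (@isAtomBotBox Agt) Om) :
  forall S1 G1 D1, der S1 G1 D1 -> forall Dl, perm_eq D1 (Box G lam :: Dl) ->
  der (S' ++ S1) (G1 ++ Pi) (Dl ++ Box K b :: Om).
Proof.
move=> S1 G1 D1; elim=> {S1 G1 D1}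
 [S Gam Del p S'' Gam' Del' hS p1 p2 p3
 |S Gam Del S'' Gam' Del' hS p1 p2 p3
 |S Gam Del a1 a2 S'' Gam' Del' d1 IH1 d2 IH2 p1 p2 p3
 |S Gam Del a1 a2 S'' Gam' Del' d1 IH1 p1 p2 p3
 |S Gam Del a1 a2 S'' Gam' Del' d1 IH1 p1 p2 p3
 |S Gam Del a1 a2 S'' Gam' Del' d1 IH1 d2 IH2 p1 p2 p3
 |S Gam Del a1 a2 S'' Gam' Del' d1 IH1 p1 p2 p3
 |S Gam Del a1 a2 S'' Gam' Del' d1 IH1 d2 IH2 p1 p2 p3
 |S Gam Del a S'' Gam' Del' d1 IH1 p1 p2 p3
 |S Gam Del a S'' Gam' Del' d1 IH1 p1 p2 p3
 |bs b0 K0 S Pi1 Om1 S'' Gam' Del' d1 IH1 hbs hS hPi1 hOm1 p1 p2 p3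
 |S Gam Del G0 a S'' Gam' Del' d1 IH1 p1 p2 p3] Dl hp.
- apply: (@init_mem _ _ _ _ p); first by rewrite all_cat hS' (isBox_perm p1 hS).
  + by rewrite mem_cat (mem_perm p2).
  + by rewrite mem_cat (mem_cons_neq hp (mem_perm p3)).
- apply: bot_mem; first by rewrite all_cat hS' (isBox_perm p1 hS).
  by rewrite mem_cat (mem_perm p2).
- have [r [r1 r2]] := perm_split hp p3 isT.
  eapply (@der_Rand _ (S' ++ S) (Gam ++ Pi) (r ++ Box K b :: Om) a1 a2); try pcount.
  + apply: der_perm (IH1 (a1 :: r) _) _ _ _; pcount.
  + apply: der_perm (IH2 (a2 :: r) _) _ _ _; pcount.
- eapply (@der_Land _ (S' ++ S) (Gam ++ Pi) (Dl ++ Box K b :: Om) a1 a2); try pcount.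
  apply: der_perm (IH1 Dl _) _ _ _; pcount.
- have [r [r1 r2]] := perm_split hp p3 isT.
  eapply (@der_Ror _ (S' ++ S) (Gam ++ Pi) (r ++ Box K b :: Om) a1 a2); try pcount.
  apply: der_perm (IH1 (a1 :: a2 :: r) _) _ _ _; pcount.
- eapply (@der_Lor _ (S' ++ S) (Gam ++ Pi) (Dl ++ Box K b :: Om) a1 a2); try pcount.
  + apply: der_perm (IH1 Dl _) _ _ _; pcount.
  + apply: der_perm (IH2 Dl _) _ _ _; pcount.
- have [r [r1 r2]] := perm_split hp p3 isT.
  eapply (@der_Rimp _ (S' ++ S) (Gam ++ Pi) (r ++ Box K b :: Om) a1 a2); try pcount.
  apply: der_perm (IH1 (a2 :: r) _) _ _ _; pcount.
- eapply (@der_Limp _ (S' ++ S) (Gam ++ Pi) (Dl ++ Box K b :: Om) a1 a2); try pcount.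
  + apply: der_perm (IH1 (a1 :: Dl) _) _ _ _; pcount.
  + apply: der_perm (IH2 Dl _) _ _ _; pcount.
- have [r [r1 r2]] := perm_split hp p3 isT.
  eapply (@der_Rneg _ (S' ++ S) (Gam ++ Pi) (r ++ Box K b :: Om) a); try pcount.
  apply: der_perm (IH1 r _) _ _ _; pcount.
- eapply (@der_Lneg _ (S' ++ S) (Gam ++ Pi) (Dl ++ Box K b :: Om) a); try pcount.
  apply: der_perm (IH1 (a :: Dl) _) _ _ _; pcount.
- have [hb1 hbx] := DK_canon d1 hbs hS p1.
  case: (eqVneq (Box G lam) (Box K0 b0)) => e.
  + case: e => eG el; subst K0 b0.
    have hc := Hc1 _ _ _ _ hb1 hb.
    have q := bb_sub S'' hGK.
    have hc' := weakLs [seq @body Agt x | x <- S'' & below K x && ~~ below G x] hc.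
    have hDl : perm_eq Dl Om1 by pcount.
    apply: (der_perm (S := S' ++ S'') (G := Gam' ++ Pi) (D := Box K b :: Dl ++ Om)); try pcount.
    apply: DKc.
    * by rewrite all_cat hS'.
    * by rewrite all_cat hPi andbT (perm_all _ p2).
    * by rewrite all_cat hOm andbT (perm_all _ hDl).
    * apply: der_perm hc' _ _ _ => //; rewrite bb_cat; pcount.
  + have [r [r1 r2]] := perm_split hp p3 e.
    have h : der S'' Gam' (Box K0 b0 :: r).
      apply: DKc => //; first by rewrite (perm_all _ p2).
      by move: hOm1; rewrite (perm_all _ r2); case/andP.
    have := weak_all (S1 := S') Pi (Box K b :: Om) hS' h.
    move=> h'; apply: der_perm h' _ _ _; pcount.
- eapply (@der_DT _ (S' ++ S) (Gam ++ Pi) (Dl ++ Box K b :: Om) G0 a); try pcount.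
  apply: der_perm (IH1 Dl _) _ _ _; pcount.
Qed.
End S.


Section S.
Variable Agt : finType.
Notation form := (form Agt).
Notation der := (@der Agt).
Notation Var := (@Var Agt).
Notation Bot := (@Bot Agt).

Lemma cut2 G lam (Hc1 : Cut1 lam) : forall T G' D', der T G' D' ->
  forall S', perm_eq T (Box G lam :: S') -> forall S1 G1 D1, all (@isBox Agt) S1 ->
  der S1 G1 (Box G lam :: D1) -> der (S' ++ S1) (G1 ++ G') (D1 ++ D').
Proof.
move=> T G' D'; elim=> {T G' D'}
 [S Gam Del p S'' Gam' Del' hS p1 p2 p3
 |S Gam Del S'' Gam' Del' hS p1 p2 p3
 |S Gam Del a1 a2 S'' Gam' Del' d1 IH1 d2 IH2 p1 p2 p3
 |S Gam Del a1 a2 S'' Gam' Del' d1 IH1 p1 p2 p3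
 |S Gam Del a1 a2 S'' Gam' Del' d1 IH1 p1 p2 p3
 |S Gam Del a1 a2 S'' Gam' Del' d1 IH1 d2 IH2 p1 p2 p3
 |S Gam Del a1 a2 S'' Gam' Del' d1 IH1 p1 p2 p3
 |S Gam Del a1 a2 S'' Gam' Del' d1 IH1 d2 IH2 p1 p2 p3
 |S Gam Del a S'' Gam' Del' d1 IH1 p1 p2 p3
 |S Gam Del a S'' Gam' Del' d1 IH1 p1 p2 p3
 |bs b K S Pi Om S'' Gam' Del' d1 IH1 hbs hS hPi hOm p1 p2 p3
 |S Gam Del G0 a S'' Gam' Del' d1 IH1 p1 p2 p3] S' hp S1 G1 D1 hS1 P1;
 try have hp' : perm_eq S (Box G lam :: S') by pcount.
- have hS' : all (@isBox Agt) S' by move: hS; rewrite (perm_all _ hp').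
  apply: (@init_mem _ _ _ _ p); first by rewrite all_cat hS' hS1.
  + by rewrite mem_cat (mem_perm p2) orbT.
  + by rewrite mem_cat (mem_perm p3) orbT.
- have hS' : all (@isBox Agt) S' by move: hS; rewrite (perm_all _ hp').
  apply: bot_mem; first by rewrite all_cat hS' hS1.
  by rewrite mem_cat (mem_perm p2) orbT.
- eapply (@der_Rand _ (S' ++ S1) (G1 ++ Gam) (D1 ++ Del) a1 a2); try pcount.
  + apply: der_perm (IH1 S' hp' _ _ _ hS1 P1) _ _ _; pcount.
  + apply: der_perm (IH2 S' hp' _ _ _ hS1 P1) _ _ _; pcount.
- eapply (@der_Land _ (S' ++ S1) (G1 ++ Gam) (D1 ++ Del) a1 a2); try pcount.
  apply: der_perm (IH1 S' hp' _ _ _ hS1 P1) _ _ _; pcount.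
- eapply (@der_Ror _ (S' ++ S1) (G1 ++ Gam) (D1 ++ Del) a1 a2); try pcount.
  apply: der_perm (IH1 S' hp' _ _ _ hS1 P1) _ _ _; pcount.
- eapply (@der_Lor _ (S' ++ S1) (G1 ++ Gam) (D1 ++ Del) a1 a2); try pcount.
  + apply: der_perm (IH1 S' hp' _ _ _ hS1 P1) _ _ _; pcount.
  + apply: der_perm (IH2 S' hp' _ _ _ hS1 P1) _ _ _; pcount.
- eapply (@der_Rimp _ (S' ++ S1) (G1 ++ Gam) (D1 ++ Del) a1 a2); try pcount.
  apply: der_perm (IH1 S' hp' _ _ _ hS1 P1) _ _ _; pcount.
- eapply (@der_Limp _ (S' ++ S1) (G1 ++ Gam) (D1 ++ Del) a1 a2); try pcount.
  + apply: der_perm (IH1 S' hp' _ _ _ hS1 P1) _ _ _; pcount.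
  + apply: der_perm (IH2 S' hp' _ _ _ hS1 P1) _ _ _; pcount.
- eapply (@der_Rneg _ (S' ++ S1) (G1 ++ Gam) (D1 ++ Del) a); try pcount.
  apply: der_perm (IH1 S' hp' _ _ _ hS1 P1) _ _ _; pcount.
- eapply (@der_Lneg _ (S' ++ S1) (G1 ++ Gam) (D1 ++ Del) a); try pcount.
  apply: der_perm (IH1 S' hp' _ _ _ hS1 P1) _ _ _; pcount.
- have [hb hbx] := DK_canon d1 hbs hS p1.
  have hS' : all (@isBox Agt) S' by move: hbx; rewrite (perm_all _ hp).
  have hbb := bb_perm K hp; rewrite bb_cons /= in hbb.
  have hPi' : all (@isAtomBot Agt) Gam' by rewrite (perm_all _ p2).
  case hGK: (gset G \subset gset K) in hbb.
  + have hb' : der [::] (lam :: bb K S') [:: b] by apply: der_perm hb _ _ _ => //; rewrite perm_sym.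
    have := cut2_dk Hc1 hGK hb' hS' hPi' hOm P1 (perm_refl _).
    move=> h; apply: der_perm h _ _ _; pcount.
  + have hb' : der [::] (bb K S') [:: b] by apply: der_perm hb _ _ _ => //; rewrite perm_sym.
    have h : der S' Gam' (Box K b :: Om) by apply: DKc.
    have := weak_all (S1 := S1) G1 D1 hS1 h.
    move=> h'; apply: der_perm h' _ _ _; pcount.
- eapply (@der_DT _ (S' ++ S1) (G1 ++ Gam) (D1 ++ Del) G0 a); try pcount.
  apply: der_perm (IH1 (Box G0 a :: S') _ _ _ _ hS1 P1) _ _ _; pcount.
Qed.
End S.


Section S.
Variable Agt : finType.
Notation form := (form Agt).
Notation der := (@der Agt).
Notation Var := (@Var Agt).
Notation Bot := (@Bot Agt).

Lemma cut1_all (lam : form) : Cut1 lam.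
Proof.
elim: lam.
- move=> p Gm Dl G' D' h1 h2.
  exact: (acut h1 (perm_refl _) h2).
- move=> Gm Dl G' D' h1 h2.
  have h := rbot h1 (perm_refl _).
  have := weak_all (S1 := [::]) G' D' isT h.
  move=> h'; apply: der_perm h' _ _ _ => //; pcount.
- move=> a IHa b IHb Gm Dl G' D' h1 h2.
  have h1a : der [::] Gm (a :: Dl) by apply: (invRand1 (b := b) h1).
  have h1b : der [::] Gm (b :: Dl) by apply: (invRand2 (a := a) h1).
  have h2' : der [::] (a :: b :: G') D' by apply: (invLand h2).
  have h3 := IHa _ _ _ _ h1a h2'.
  have h3' : der [::] (b :: Gm ++ G') (Dl ++ D') by apply: der_perm h3 _ _ _; pcount.
  have h4 := IHb _ _ _ _ h1b h3'.
  apply: contrLs; apply: contrRs; apply: der_perm h4 _ _ _; pcount.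
- move=> a IHa b IHb Gm Dl G' D' h1 h2.
  have h1' : der [::] Gm (a :: b :: Dl) by apply: (invRor h1).
  have h2a : der [::] (a :: G') D' by apply: (invLor1 (b := b) h2).
  have h2b : der [::] (b :: G') D' by apply: (invLor2 (a := a) h2).
  have h3 := IHa _ _ _ _ h1' h2a.
  have h3' : der [::] (Gm ++ G') (b :: Dl ++ D') by apply: der_perm h3 _ _ _; pcount.
  have h4 := IHb _ _ _ _ h3' h2b.
  have h5 : der [::] (G' ++ G' ++ Gm) (D' ++ D' ++ Dl) by apply: der_perm h4 _ _ _; pcount.
  have h6 := contrRs (contrLs h5).
  apply: der_perm h6 _ _ _; pcount.
- move=> a IHa b IHb Gm Dl G' D' h1 h2.
  have h1' : der [::] (a :: Gm) (b :: Dl) by apply: (invRimp h1).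
  have h2a : der [::] G' (a :: D') by apply: (invLimp1 (b := b) h2).
  have h2b : der [::] (b :: G') D' by apply: (invLimp2 (a := a) h2).
  have h3 := IHb _ _ _ _ h1' h2b.
  have h3' : der [::] (a :: Gm ++ G') (Dl ++ D') by apply: der_perm h3 _ _ _; pcount.
  have h4 := IHa _ _ _ _ h2a h3'.
  have h5 : der [::] (G' ++ G' ++ Gm) (D' ++ D' ++ Dl) by apply: der_perm h4 _ _ _; pcount.
  have h6 := contrRs (contrLs h5).
  apply: der_perm h6 _ _ _; pcount.
- move=> a IHa Gm Dl G' D' h1 h2.
  have h1' : der [::] (a :: Gm) Dl by apply: (invRneg h1).
  have h2' : der [::] G' (a :: D') by apply: (invLneg h2).
  have h3 := IHa _ _ _ _ h2' h1'.
  apply: der_perm h3 _ _ _; pcount.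
- move=> K c IHc Gm Dl G' D' h1 h2.
  have h2' : der [:: Box K c] (c :: G') D' by apply: (invDT h2).
  have h3 := cut2 IHc h2' (perm_refl _) (isT : all (@isBox Agt) [::]) h1.
  have h1' : der [::] Gm (c :: Dl) by apply: (Tadm h1 (perm_refl _)).
  have h3' : der [::] (c :: Gm ++ G') (Dl ++ D') by apply: der_perm h3 _ _ _; pcount.
  have h4 := IHc _ _ _ _ h1' h3'.
  apply: contrLs; apply: contrRs; apply: der_perm h4 _ _ _; pcount.
Qed.
End S.

Theorem proposition6p12 (Agt : finType) (HAgt : 0 < #|Agt|) :
  (* (Cut_1) *)
  (forall (Gam Del Gam' Del' : seq (form Agt)) (lam : form Agt),
      der [::] Gam (Del ++ [:: lam]) ->
      der [::] (lam :: Gam') Del' ->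
      der [::] (Gam ++ Gam') (Del ++ Del'))
  /\
  (* (Cut_2) *)
  (forall (S S' Gam Del Gam' Del' : seq (form Agt)) (G : grp Agt) (lam : form Agt),
      all (@isBox Agt) S -> all (@isBox Agt) S' ->
      der S Gam (Del ++ [:: Box G lam]) ->
      der (Box G lam :: S') Gam' Del' ->
      der (S' ++ S) (Gam ++ Gam') (Del ++ Del')).
Proof.
split.
- move=> Gam Del Gam' Del' lam h1 h2.
  apply: (@cut1_all Agt lam Gam Del Gam' Del' _ h2).
  apply: der_perm h1 _ _ _; pcount.
- move=> S S' Gam Del Gam' Del' G lam hS hS' h1 h2.
  apply: (cut2 (@cut1_all Agt lam) h2 (perm_refl _) hS).
  apply: der_perm h1 _ _ _; pcount.
Qed.
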